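(* The following two statements are equivalent. (A) For every positive integer $k$ and every digraph $D$ of order $n \ge 12k+3$ such that $d_{D}^{+}(u) + d_{D}^{-}(v) \ge n$ for every two distinct vertices $u,v$ with $(u,v)\notin A(D)$, $D$ has a directed $2$-factor with exactly $k$ directed cycles, each of length at least $3$. (B) For every positive integer $k$, every balanced bipartite graph $G$ of order $2n$ with $n \ge 12k+3$ and every perfect matching $M$ of $G$, if $\sigma_{1,1}(G)\ge n+2$ then $G$ has a $2$-factor with exactly $k$ cycles, each of length at least $6$, containing every edge of $M$.
   Context: A digraph is finite, without loops or multiple arcs (opposite arcs allowed); $d_D^+$, $d_D^-$ denote out- and in-degree. A directed $2$-factor is a spanning subdigraph each of whose components is a directed cycle. Graphs are finite and simple; a $2$-factor is a spanning subgraph each of whose components is a cycle. For a bipartite graph $G$ with partite sets $X,Y$, $\sigma_{1,1}(G) = \min\{d_G(x)+d_G(y) : x \in X, y \in Y, xy \notin E(G)\}$ if $G$ is not complete bipartite, and $+\infty$ otherwise. *)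

(* Defs.v *)
From mathcomp Require Import all_boot all_order all_fingroup.
Set Implicit Arguments. Unset Strict Implicit. Unset Printing Implicit Defensive.

(* A digraph on the finite vertex type T is an arc relation a : rel T;
   it has no loops (irreflexive a); multiple arcs are impossible,
   opposite arcs are allowed. Its order is #|T|. *)
Definition outdeg (T : finType) (a : rel T) (u : T) : nat := #|[set v | a u v]|.
Definition indeg (T : finType) (a : rel T) (v : T) : nat := #|[set u | a u v]|.

(* A directed 2-factor of D with exactly k directed cycles, each of length
   at least 3: a spanning subdigraph in which every vertex has in- and
   out-degree 1, i.e. a permutation s of V(D) with (u, s u) an arc for all u;
   its components (directed cycles) are the cycles (porbits) of s. *)
Definition has_dir_2factor_k (T : finType) (a : rel T) (k : nat) : Prop :=
  exists s : {perm T},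
    [/\ forall u, a u (s u),
        #|porbits s| = k
      & forall C, C \in porbits s -> 3 <= #|C|].

Definition bdegX (X Y : finType) (e : X -> Y -> bool) (x : X) : nat :=
  #|[set y | e x y]|.
Definition bdegY (X Y : finType) (e : X -> Y -> bool) (y : Y) : nat :=
  #|[set x | e x y]|.

(* sigma_{1,1}(G) >= m, where sigma_{1,1} = +oo for complete bipartite G. *)
Definition sigma11_ge (X Y : finType) (e : X -> Y -> bool) (m : nat) : Prop :=
  forall x y, ~~ e x y -> m <= bdegX e x + bdegY e y.

Definition edge_set (X Y : finType) (e : X -> Y -> bool) (F : {set X * Y}) :=
  forall p, p \in F -> e p.1 p.2.

Definition perfect_matching (X Y : finType) (e : X -> Y -> bool)
    (M : {set X * Y}) : Prop :=
  [/\ edge_set e M,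
      forall x, #|[set y | (x, y) \in M]| = 1
    & forall y, #|[set x | (x, y) \in M]| = 1].

Definition adjF (X Y : finType) (F : {set X * Y}) : rel (X + Y) :=
  fun u v => match u, v with
             | inl x, inr y => (x, y) \in F
             | inr y, inl x => (x, y) \in F
             | _, _ => false
             end.

Definition components (X Y : finType) (F : {set X * Y}) : {set {set X + Y}} :=
  [set [set v | connect (adjF F) u v] | u : X + Y].

(* F is (the edge set of) a 2-factor of G with exactly k cycles, each of
   length at least 6: a spanning subgraph in which every vertex has degree 2
   (so each component is a cycle), having exactly k components, each with at
   least 6 vertices (= its length). *)
Definition two_factor_k (X Y : finType) (e : X -> Y -> bool)
    (F : {set X * Y}) (k : nat) : Prop :=
  [/\ edge_set e F,
      forall x, #|[set y | (x, y) \in F]| = 2,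
      forall y, #|[set x | (x, y) \in F]| = 2,
      #|components F| = k
    & forall C, C \in components F -> 6 <= #|C|].

Definition statementA : Prop :=
  forall (k : nat), 0 < k ->
  forall (T : finType) (a : rel T), irreflexive a ->
    12 * k + 3 <= #|T| ->
    (forall u v, u != v -> ~~ a u v -> #|T| <= outdeg a u + indeg a v) ->
    has_dir_2factor_k a k.

Definition statementB : Prop :=
  forall (k : nat), 0 < k ->
  forall (X Y : finType) (e : X -> Y -> bool) (n : nat),
    #|X| = n -> #|Y| = n -> 12 * k + 3 <= n ->
    forall M : {set X * Y}, perfect_matching e M ->
    sigma11_ge e (n + 2) ->
    exists F : {set X * Y}, two_factor_k e F k /\ M \subset F.

(* Main.v *)
Require Import Defs.
From mathcomp Require Import all_boot all_order all_fingroup zify.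
Set Implicit Arguments. Unset Strict Implicit. Unset Printing Implicit Defensive.

Lemma porbit_s (X : finType) (s : {perm X}) x z :
  (s z \in porbit s x) = (z \in porbit s x).
Proof.
rewrite -!eq_porbit_mem; have := porbit_perm s 1 z; rewrite expg1 => ->; by [].
Qed.


Definition phiS (X Y : finType) (minv : Y -> X) (P : {set X}) : {set X + Y} :=
  [set v : X + Y | match v with inl x => x \in P | inr y => minv y \in P end].

Lemma phiS_card (X Y : finType) (m : X -> Y) (minv : Y -> X)
  (mK : cancel m minv) (minvK : cancel minv m) (P : {set X}) :
  #|phiS minv P| = #|P| * 2.
Proof.
have inl_inj : injective (@inl X Y) by move=> ? ? [].
have inr_inj : injective (@inr X Y) by move=> ? ? [].
have -> : phiS minv P = inl @: P :|: inr @: (m @: P).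
  apply/setP => -[x|y]; rewrite !inE /=.
    rewrite (mem_imset _ _ inl_inj); case: imsetP => [[? _ //]|_]; by rewrite orbF.
  rewrite (mem_imset _ _ inr_inj); have -> : (y \in m @: P) = (minv y \in P) by rewrite -{1}(minvK y) (mem_imset _ _ (can_inj mK)).
  by case: imsetP => [[? _ //]|_].
rewrite cardsU (card_imset _ inl_inj) (card_imset _ inr_inj) (card_imset _ (can_inj mK)).
have -> : inl @: P :&: inr @: (m @: P) = set0.
  apply/setP => v; rewrite !inE; case: imsetP => // -[x _ ->].
  by case: imsetP => // -[? _].
by rewrite cards0 subn0 muln2 addnn.
Qed.

Lemma phiS_inj (X Y : finType) (minv : Y -> X) : injective (phiS minv).
Proof.
move=> P Q h; apply/setP => x.
by have := congr1 (fun S : {set X + Y} => inl x \in S) h; rewrite !inE.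
Qed.

Definition Fof (X Y : finType) (m : X -> Y) (s : {perm X}) : {set X * Y} :=
  [set p : X * Y | (p.2 == m p.1) || (p.2 == m (s p.1))].

Definition baseXY (X Y : finType) (minv : Y -> X) (u : X + Y) : X :=
  match u with inl x => x | inr y => minv y end.

Lemma comp_eq (X Y : finType) (m : X -> Y) (minv : Y -> X)
  (mK : cancel m minv) (minvK : cancel minv m) (s : {perm X}) (u : X + Y) :
  [set v | connect (adjF (Fof m s)) u v] = phiS minv (porbit s (baseXY minv u)).
Proof.
set e := adjF (Fof m s).
have step z : connect e (inl z) (inl (s z)).
  apply: (@connect_trans _ e (inr (m (s z)))); apply: connect1;
    by rewrite /e /= inE /= eqxx ?orbT.
have iter z i : connect e (inl z) (inl ((s ^+ i)%g z)).
  elim: i => [|i IH]; first by rewrite expg0 perm1.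
  by rewrite expgSr permM; apply: connect_trans IH (step _).
have eyx y : e (inl (minv y)) (inr y) by rewrite /e /= inE /= minvK eqxx.
set b := baseXY minv u.
have ub : connect e u (inl b).
  rewrite /b; case: u {b} => [x|y] /=; first exact: connect0.
  by apply: connect1; rewrite /e /= inE /= minvK eqxx.
have cl : closed e (phiS minv (porbit s b)).
  move=> [z|y] [z'|y'] //=; rewrite /e /= inE /= !inE.
    by case/orP => /eqP ->; rewrite mK ?porbit_s.
  by case/orP => /eqP ->; rewrite mK ?porbit_s.
have uin : u \in phiS minv (porbit s b).
  by rewrite /b; case: (u) => [x|y]; rewrite inE /= porbit_id.
apply/setP => v; rewrite inE; apply/idP/idP.
  by move=> /(closed_connect cl) <-.
move=> vin; apply: connect_trans ub _.
case: v vin => [z|y]; rewrite inE /=.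
  by case/porbitP => i ->; apply: iter.
case/porbitP => i hi; apply: connect_trans (iter b i) _.
by rewrite -hi; apply: connect1.
Qed.

Lemma comp_struct (X Y : finType) (m : X -> Y) (minv : Y -> X)
  (mK : cancel m minv) (minvK : cancel minv m) (s : {perm X}) :
  components (Fof m s) = phiS minv @: porbits s.
Proof.
apply/setP => C; apply/imsetP/imsetP.
  case=> u _ ->; exists (porbit s (baseXY minv u)); first by apply: imset_f.
  exact: (comp_eq mK minvK).
case=> P /imsetP [x _ ->] ->; exists (inl x) => //.
by rewrite (comp_eq mK minvK).
Qed.

Lemma comp_card (X Y : finType) (m : X -> Y) (minv : Y -> X)
  (mK : cancel m minv) (minvK : cancel minv m) (s : {perm X}) :
  #|components (Fof m s)| = #|porbits s|.
Proof. by rewrite (comp_struct mK minvK) card_imset //; apply: phiS_inj. Qed.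


Lemma card1_uniq (T : finType) (A : {set T}) :
  #|A| = 1 -> forall y z, y \in A -> z \in A -> y = z.
Proof. by move/eqP/cards1P => [w ->] y z; rewrite !inE => /eqP -> /eqP ->. Qed.

Lemma BtoA : statementB -> statementA.
Proof.
move=> hB k hk T a irr hn hdeg.
pose e := fun x y : T => a x y || (x == y).
pose M := [set p : T * T | p.2 == p.1].
have degX x : #|[set y | e x y]| = (outdeg a x).+1.
  have -> : [set y | e x y] = x |: [set y | a x y].
    by apply/setP => y; rewrite !inE /e orbC eq_sym.
  by rewrite cardsU1 inE irr.
have degY y : #|[set x | e x y]| = (indeg a y).+1.
  have -> : [set x | e x y] = y |: [set x | a x y].
    by apply/setP => x; rewrite !inE /e orbC.
  by rewrite cardsU1 inE irr.
have pm : perfect_matching e M.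
  split.
  - by move=> [x y]; rewrite inE /= /e => /eqP ->; rewrite eqxx orbT.
  - move=> x; have -> : [set y | (x, y) \in M] = [set x].
      by apply/setP => y; rewrite !inE.
    by rewrite cards1.
  - move=> y; have -> : [set x | (x, y) \in M] = [set y].
      by apply/setP => x; rewrite !inE eq_sym.
    by rewrite cards1.
have sig : sigma11_ge e (#|T| + 2).
  move=> x y; rewrite /e negb_or => /andP [nxy neq].
  rewrite /bdegX /bdegY degX degY.
  have := hdeg x y neq nxy; lia.
have [F [[eF dX dY cK cS] MF]] := hB k hk T T e #|T| erefl erefl hn M pm sig.
have xxF x : (x, x) \in F by apply: (subsetP MF); rewrite inE.
pose sf x := odflt x [pick y | ((x, y) \in F) && (y != x)].
have card1 x : #|[set y | (x, y) \in F] :\ x| = 1.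
  have := dX x; rewrite (cardsD1 x) inE xxF; lia.
have sfP x : ((x, sf x) \in F) && (sf x != x).
  rewrite /sf; case: pickP => [y //|h].
  have : 0 < #|[set y | (x, y) \in F] :\ x| by rewrite card1.
  case/card_gt0P => w; rewrite !inE => /andP [wx wF].
  by have := h w; rewrite wF wx.
have Fchar x y : ((x, y) \in F) = (y == x) || (y == sf x).
  apply/idP/idP.
    move=> xyF; case: eqP => //= /eqP yx; apply/eqP.
    case/andP: (sfP x) => h1 h2.
    by apply: (card1_uniq (card1 x)); rewrite !inE ?yx ?h2.
  by case/orP => /eqP ->; [exact: xxF | case/andP: (sfP x)].
have sf_inj : injective sf.
  move=> x x' h; set y := sf x' in h.
  have c1 : #|[set z | (z, y) \in F] :\ y| = 1.
    have := dY y; rewrite (cardsD1 y) inE xxF; lia.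
  case/andP: (sfP x) => h1 h2; case/andP: (sfP x') => h3 h4.
  apply: (card1_uniq c1); rewrite !inE.
    by rewrite -h eq_sym h2 h1.
  by rewrite /y eq_sym h4 h3.
pose s := perm sf_inj.
have sE x : s x = sf x by rewrite permE.
have FE : F = Fof id s.
  by apply/setP => -[x y]; rewrite inE /= Fchar sE.
exists s; split.
- move=> u; case/andP: (sfP u) => h1 h2; have := eF _ h1; rewrite /= /e sE.
  by rewrite eq_sym (negbTE h2) orbF.
- by rewrite -cK FE (comp_card (m := id) (minv := id)).
- move=> P Ps; have : phiS id P \in components F.
    by rewrite FE (comp_struct (m := id) (minv := id)) // imset_f.
  move/cS; rewrite (phiS_card (m := id)) //; lia.
Qed.

Lemma AtoB : statementA -> statementB.
Proof.
move=> hA k hk X Y e n hX hY hn M [eM mX mY] sig.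
have [x0 _] : exists x0 : X, true.
  have : 0 < #|X| by rewrite hX; lia.
  by case/card_gt0P => x _; exists x.
have [y0 _] : exists y0 : Y, true.
  have : 0 < #|Y| by rewrite hY; lia.
  by case/card_gt0P => y _; exists y.
pose m x := odflt y0 [pick y | (x, y) \in M].
pose minv y := odflt x0 [pick x | (x, y) \in M].
have mM x : (x, m x) \in M.
  rewrite /m; case: pickP => [y //|h].
  have : 0 < #|[set y | (x, y) \in M]| by rewrite mX.
  by case/card_gt0P => w; rewrite inE h.
have minvM y : (minv y, y) \in M.
  rewrite /minv; case: pickP => [x //|h].
  have : 0 < #|[set x | (x, y) \in M]| by rewrite mY.
  by case/card_gt0P => w; rewrite inE h.
have Mx x y : (x, y) \in M -> y = m x.
  move=> h; apply: (card1_uniq (mX x)); by rewrite inE.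
have My x y : (x, y) \in M -> x = minv y.
  move=> h; apply: (card1_uniq (mY y)); by rewrite inE.
have mK : cancel m minv by move=> x; rewrite -(My _ _ (mM x)).
have minvK : cancel minv m by move=> y; rewrite -(Mx _ _ (minvM y)).
have m_inj := can_inj mK.
pose a := fun x x' : X => (x != x') && e x (m x').
have irr : irreflexive a by move=> x; rewrite /a eqxx.
have emm x : e x (m x) by apply: (eM (x, m x)).
have degX x : #|[set y | e x y]| = (outdeg a x).+1.
  have -> : [set y | e x y] = m @: [set x' | e x (m x')].
    apply/setP => y; rewrite inE -{2}(minvK y) (mem_imset _ _ m_inj) inE minvK //.
  rewrite (card_imset _ m_inj).
  have -> : [set x' | e x (m x')] = x |: [set x' | a x x'].
    apply/setP => x'; rewrite !inE /a; case: (eqVneq x x') => [<-|h]; rewrite ?eqxx ?emm // h /= eq_sym (negbTE h).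
  by rewrite cardsU1 inE irr.
have degY x' : #|[set x | e x (m x')]| = (indeg a x').+1.
  have -> : [set x | e x (m x')] = x' |: [set x | a x x'].
    apply/setP => x; rewrite !inE /a; case: (eqVneq x x') => [->|h]; rewrite ?eqxx ?emm // h /= (negbTE h).
  by rewrite cardsU1 inE irr.
have hT : 12 * k + 3 <= #|X| by rewrite hX.
have deg u v : u != v -> ~~ a u v -> #|X| <= outdeg a u + indeg a v.
  move=> uv; rewrite /a uv /= => nuv.
  have := sig _ _ nuv; rewrite /bdegX /bdegY degX degY hX; rewrite -/a; lia.
have [s [arc cK cS]] := hA k hk X a irr hT deg.
have sx x : s x != x by have := arc x; rewrite /a eq_sym => /andP [].
exists (Fof m s); split; last first.
  apply/subsetP => -[x y] /Mx ->; by rewrite inE /= eqxx.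
split.
- move=> [x y]; rewrite inE /= => /orP [] /eqP ->; first exact: emm.
  by case/andP: (arc x).
- move=> x; have -> : [set y | (x, y) \in Fof m s] = [set m x; m (s x)].
    by apply/setP => y; rewrite !inE.
  by rewrite cards2 (inj_eq m_inj) eq_sym sx.
- move=> y; have -> : [set x | (x, y) \in Fof m s] = [set minv y; (s^-1)%g (minv y)].
    apply/setP => x; rewrite !inE /=.
    rewrite -{1}(minvK y) -{2}(minvK y) !(inj_eq m_inj).
    rewrite [minv y == _]eq_sym [minv y == s x]eq_sym.
    by rewrite -{2}(permKV s (minv y)) (inj_eq (@perm_inj _ s)).
  rewrite cards2; suff -> : minv y != (s^-1)%g (minv y) by []; apply/eqP => h.
  by have := sx ((s^-1)%g (minv y)); rewrite permKV -h eqxx.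
- by rewrite (comp_card mK minvK).
- move=> C; rewrite (comp_struct mK minvK) => /imsetP [P Ps ->].
  rewrite (phiS_card mK minvK); have := cS P Ps; lia.
Qed.

Theorem proposition1 : statementA <-> statementB.
Proof. by split; [exact: AtoB | exact: BtoA]. Qed.
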